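(* Let $\Bbbk$ be a field, let $\mathrm{Var}$ be a variety of $\Bbbk$-algebras with one binary product defined by polylinear identities, and $\text{tri-}\mathrm{Var}$ the corresponding replicated variety of tri-algebras. Let $X$ be a set, $\dot X$ a disjoint copy of $X$, $F=\mathrm{Var}\langle X\cup\dot X\rangle$, $\varphi:F\to F$ the algebra homomorphism with $\varphi(x)=\varphi(\dot x)=x$, $F^{(3)}$ the space $F$ with operations $f\vdash g=\varphi(f)g$, $f\dashv g=f\varphi(g)$, $f\perp g=fg$, and $V$ the subalgebra of $F^{(3)}$ generated by $\dot X$ (so that $V\cong \text{tri-}\mathrm{Var}\langle X\rangle$ via $\dot x\leftrightarrow x$). Let $S\subseteq V$, and let $(S)^{(3)}$ denote the ideal of the tri-algebra $V$ generated by $S$ (the smallest subspace of $V$ containing $S$ and closed under $v* j$ and $j* v$ for $v\in V$, $j$ in it, $*\in\{\vdash,\dashv,\perp\}$). Then $$(S)^{(3)}=(S\cup\varphi(S))\cap V,$$ where $(P)$ denotes the (two-sided) ideal of the algebra $F$ generated by a subset $P\subseteq F$.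
   Context: Tri-algebras: linear spaces with three bilinear operations $\dashv$ (=$\mu_{\{1\}}$), $\vdash$ (=$\mu_{\{2\}}$), $\perp$ (=$\mu_{\{1,2\}}$). For a polylinear $\Phi(x_1,\dots,x_n)$ in the free algebra with one binary operation $\mu$ and nonempty $H\subseteq\{1,\dots,n\}$, $\Phi_H$ is obtained by viewing each monomial as a binary tree, marking leaves $x_i$, $i\in H$, and replacing $\mu$ at each node by $\mu_S$, $S\subseteq\{1,2\}$ the set of branches containing a marked leaf (by $\mu_{\{1\}}$ if $S=\varnothing$). $\text{tri-}\mathrm{Var}$ consists of tri-algebras satisfying $(a* b)\vdash c=(a\star b)\vdash c$, $a\dashv(b* c)=a\dashv(b\star c)$ for all $*,\star\in\{\vdash,\dashv,\perp\}$, and $\Phi_H=0$ for each defining identity $\Phi$ of $\mathrm{Var}$ and each nonempty $H$. *)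

(* Defs.v *)
From HB Require Import structures.
From mathcomp Require Import all_boot all_order all_algebra.
Set Implicit Arguments. Unset Strict Implicit. Unset Printing Implicit Defensive.
Import GRing.Theory.
Local Open Scope ring_scope.

Record nalg (k : fieldType) := NAlg {
  nalg_sort :> lmodType k;
  nmul : nalg_sort -> nalg_sort -> nalg_sort;
  nmul_linl : forall (b : nalg_sort) (a : k) (x y : nalg_sort),
      nmul (a *: x + y) b = a *: nmul x b + nmul y b;
  nmul_linr : forall (b : nalg_sort) (a : k) (x y : nalg_sort),
      nmul b (a *: x + y) = a *: nmul b x + nmul b y
}.
Arguments nmul {k A} : rename.

(** Nonassociative monomials (binary trees with leaves x_i, i : nat). *)
Inductive mterm := MVar of nat | MMul of mterm & mterm.

Fixpoint leaves (t : mterm) : seq nat :=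
  match t with MVar i => [:: i] | MMul t1 t2 => leaves t1 ++ leaves t2 end.

(** A polynomial identity Phi(x_0,...,x_{n-1}) is a formal linear combination
    of monomials; it is polylinear when every monomial contains each of
    x_0,...,x_{n-1} exactly once. *)
Definition polylinear (k : fieldType) (n : nat) (p : seq (k * mterm)) : bool :=
  all (fun ct => perm_eq (leaves ct.2) (iota 0 n)) p.

Fixpoint meval (k : fieldType) (A : nalg k) (v : nat -> A) (t : mterm) : A :=
  match t with
  | MVar i => v i
  | MMul t1 t2 => nmul (meval v t1) (meval v t2)
  end.

Definition peval (k : fieldType) (A : nalg k) (v : nat -> A) (p : seq (k * mterm)) : A :=
  \sum_(ct <- p) ct.1 *: meval v ct.2.

Definition in_variety (k : fieldType) (Ids : nat -> seq (k * mterm) -> Prop)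
  (A : nalg k) : Prop :=
  forall n p, Ids n p -> forall v : nat -> A, peval v p = 0.

Definition is_hom (k : fieldType) (A B : nalg k) (g : A -> B) : Prop :=
  (forall (a : k) (x y : A), g (a *: x + y) = a *: g x + g y) /\
  (forall x y : A, g (nmul x y) = nmul (g x) (g y)).

Definition is_free (k : fieldType) (Ids : nat -> seq (k * mterm) -> Prop)
  (Y : Type) (F : nalg k) (gen : Y -> F) : Prop :=
  in_variety Ids F /\
  forall (A : nalg k), in_variety Ids A -> forall f : Y -> A,
    exists g : F -> A, [/\ is_hom g, (forall y, g (gen y) = f y) &
      forall g' : F -> A, is_hom g' -> (forall y, g' (gen y) = f y) ->
        forall u, g' u = g u].

Definition is_subspace (k : fieldType) (A : lmodType k) (P : A -> Prop) : Prop :=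
  P 0 /\ forall (a : k) (x y : A), P x -> P y -> P (a *: x + y).

Definition gen_ideal (k : fieldType) (F : nalg k) (P : F -> Prop) (u : F) : Prop :=
  forall I : F -> Prop, is_subspace I -> (forall p, P p -> I p) ->
    (forall f j, I j -> I (nmul f j)) -> (forall f j, I j -> I (nmul j f)) -> I u.

(** The three operations of F^(3):  f |- g = phi(f) g,  f -| g = f phi(g),
    f _|_ g = f g.  [tri_ops phi o] holds when o is one of them. *)
Definition tri_ops (k : fieldType) (F : nalg k) (phi : F -> F) (o : F -> F -> F) : Prop :=
  [\/ o = (fun f g => nmul (phi f) g), o = (fun f g => nmul f (phi g))
    | o = (fun f g => nmul f g)].

Definition Vsub (k : fieldType) (X : Type) (F : nalg k) (gen : X + X -> F)
  (phi : F -> F) (u : F) : Prop :=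
  forall W : F -> Prop, is_subspace W -> (forall x, W (gen (inr x))) ->
    (forall o, tri_ops phi o -> forall f g, W f -> W g -> W (o f g)) -> W u.

Definition tri_ideal (k : fieldType) (X : Type) (F : nalg k) (gen : X + X -> F)
  (phi : F -> F) (S : F -> Prop) (u : F) : Prop :=
  forall J : F -> Prop, (forall j, J j -> Vsub gen phi j) -> is_subspace J ->
    (forall s, S s -> J s) ->
    (forall o, tri_ops phi o -> forall v j, Vsub gen phi v -> J j ->
        J (o v j) /\ J (o j v)) -> J u.

(* Main.v *)
Require Import Defs.
From HB Require Import structures.
From mathcomp Require Import all_boot all_order all_algebra.
From Stdlib Require Import ClassicalEpsilon.
Set Implicit Arguments. Unset Strict Implicit. Unset Printing Implicit Defensive.
Import GRing.Theory.
Local Open Scope ring_scope.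

Section Sub.
Variables (k : fieldType) (F : nalg k) (W : F -> Prop).
Hypothesis W0 : W 0.
Hypothesis Wlin : forall (a : k) x y, W x -> W y -> W (a *: x + y).
Hypothesis Wmul : forall x y, W x -> W y -> W (nmul x y).

Definition wb (u : F) : bool := if excluded_middle_informative (W u) then true else false.
Lemma wbP u : wb u -> W u.
Proof. by rewrite /wb; case: excluded_middle_informative. Qed.
Lemma wbT u : W u -> wb u.
Proof. by rewrite /wb; case: excluded_middle_informative. Qed.

Definition ST := {u : F | wb u}.
HB.instance Definition _ := Choice.on ST.

Lemma WD x y : W x -> W y -> W (x + y).
Proof. by move=> hx hy; have := Wlin 1 hx hy; rewrite scale1r. Qed.
Lemma WZ a x : W x -> W (a *: x).
Proof. by move=> hx; have := Wlin a hx W0; rewrite addr0. Qed.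
Lemma WN x : W x -> W (- x).
Proof. by move=> hx; rewrite -scaleN1r; apply: WZ. Qed.

Definition st0 : ST := exist _ 0 (wbT W0).
Definition stadd (x y : ST) : ST := exist _ (val x + val y) (wbT (WD (wbP (valP x)) (wbP (valP y)))).
Definition stopp (x : ST) : ST := exist _ (- val x) (wbT (WN (wbP (valP x)))).
Definition stscale a (x : ST) : ST := exist _ (a *: val x) (wbT (WZ a (wbP (valP x)))).
Definition stmul (x y : ST) : ST := exist _ (nmul (val x) (val y)) (wbT (Wmul (wbP (valP x)) (wbP (valP y)))).

Lemma st_addrA : associative stadd.
Proof. by move=> x y z; apply: val_inj; rewrite /= addrA. Qed.
Lemma st_addrC : commutative stadd.
Proof. by move=> x y; apply: val_inj; rewrite /= addrC. Qed.
Lemma st_add0r : left_id st0 stadd.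
Proof. by move=> x; apply: val_inj; rewrite /= add0r. Qed.
Lemma st_addNr : left_inverse st0 stopp stadd.
Proof. by move=> x; apply: val_inj; rewrite /= addNr. Qed.
HB.instance Definition _ := GRing.isZmodule.Build ST st_addrA st_addrC st_add0r st_addNr.

Lemma st_scalerA a b (x : ST) : stscale a (stscale b x) = stscale (a * b) x.
Proof. by apply: val_inj; rewrite /= scalerA. Qed.
Lemma st_scale1r : left_id 1 stscale.
Proof. by move=> x; apply: val_inj; rewrite /= scale1r. Qed.
Lemma st_scalerDr : right_distributive stscale (+%R).
Proof. by move=> a x y; apply: val_inj; rewrite /= scalerDr. Qed.
Lemma st_scalerDl (x : ST) : {morph stscale^~ x : a b / a + b}.
Proof. by move=> a b; apply: val_inj; rewrite /= scalerDl. Qed.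
HB.instance Definition _ := GRing.Zmodule_isLmodule.Build k ST st_scalerA st_scale1r st_scalerDr st_scalerDl.

Lemma st_linl (b : ST) (a : k) (x y : ST) : stmul (a *: x + y) b = a *: stmul x b + stmul y b.
Proof. by apply: val_inj; rewrite /= nmul_linl. Qed.
Lemma st_linr (b : ST) (a : k) (x y : ST) : stmul b (a *: x + y) = a *: stmul b x + stmul b y.
Proof. by apply: val_inj; rewrite /= nmul_linr. Qed.

Definition STalg : nalg k := NAlg st_linl st_linr.

Lemma val_meval (v : nat -> STalg) t : val (meval v t) = meval (fun i => val (v i)) t.
Proof. by elim: t => //= t1 IH1 t2 IH2; rewrite -IH1 -IH2. Qed.

Lemma val_peval (v : nat -> STalg) p : val (peval v p) = peval (fun i => val (v i)) p.
Proof.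
rewrite /peval; elim: p => [|ct p IH]; first by rewrite !big_nil.
by rewrite !big_cons -IH /= val_meval.
Qed.

End Sub.

Section Basics.
Variables (k : fieldType).

Lemma hom0 (A B : nalg k) (g : A -> B) : is_hom g -> g 0 = 0.
Proof.
case=> lin _; have := lin 1 0 0; rewrite !scale1r addr0 => H.
by apply: (@addrI _ (g 0)); rewrite addr0 -H.
Qed.
Lemma homD (A B : nalg k) (g : A -> B) : is_hom g -> forall x y, g (x + y) = g x + g y.
Proof. by case=> lin _ x y; have := lin 1 x y; rewrite !scale1r. Qed.
Lemma homZ (A B : nalg k) (g : A -> B) : is_hom g -> forall a x, g (a *: x) = a *: g x.
Proof. by move=> h a x; have [lin _] := h; have := lin a x 0; rewrite (hom0 h) !addr0. Qed.
Lemma homN (A B : nalg k) (g : A -> B) : is_hom g -> forall x, g (- x) = - g x.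
Proof. by move=> h x; rewrite -scaleN1r homZ // scaleN1r. Qed.
Lemma homB (A B : nalg k) (g : A -> B) : is_hom g -> forall x y, g (x - y) = g x - g y.
Proof. by move=> h x y; rewrite homD // homN. Qed.
Lemma homM (A B : nalg k) (g : A -> B) : is_hom g -> forall x y, g (nmul x y) = nmul (g x) (g y).
Proof. by case. Qed.
Lemma hom_comp (A B C : nalg k) (g : A -> B) (h : B -> C) :
  is_hom g -> is_hom h -> is_hom (fun x => h (g x)).
Proof.
move=> [g1 g2] [h1 h2]; split; first by move=> a x y; rewrite g1 h1.
by move=> x y; rewrite g2 h2.
Qed.
Lemma hom_id (A : nalg k) : is_hom (fun x : A => x).
Proof. by []. Qed.

Lemma nmulDl (A : nalg k) (x y z : A) : nmul (x + y) z = nmul x z + nmul y z.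
Proof. by have := nmul_linl z 1 x y; rewrite !scale1r. Qed.
Lemma nmulDr (A : nalg k) (x y z : A) : nmul z (x + y) = nmul z x + nmul z y.
Proof. by have := nmul_linr z 1 x y; rewrite !scale1r. Qed.
Lemma nmul0r (A : nalg k) (x : A) : nmul 0 x = 0.
Proof. by apply: (@addrI _ (nmul 0 x)); rewrite -nmulDl !addr0. Qed.
Lemma nmulr0 (A : nalg k) (x : A) : nmul x 0 = 0.
Proof. by apply: (@addrI _ (nmul x 0)); rewrite -nmulDr !addr0. Qed.

Lemma nmul_expand0 (A : nalg k) (x0 x1 y0 y1 : A) :
  nmul (x0 + x1) (y0 + y1) - nmul x1 y1 = nmul x0 y0 + nmul x0 y1 + nmul x1 y0.
Proof. by rewrite !nmulDl !nmulDr addrA addrK addrAC. Qed.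

Lemma nmul_expand (A : nalg k) (x x1 y y1 : A) :
  nmul x y - nmul x1 y1 = nmul (x - x1) (y - y1) + nmul (x - x1) y1 + nmul x1 (y - y1).
Proof.
by rewrite -{1}(subrK x1 x) -{1}(subrK y1 y) nmul_expand0.
Qed.

Lemma lin_sub (A : nalg k) (a : k) (x y x' y' : A) :
  (a *: x + y) - (a *: x' + y') = a *: (x - x') + (y - y').
Proof. by rewrite scalerBr opprD addrACA. Qed.

Lemma subsD (A : nalg k) (P : A -> Prop) : is_subspace P -> forall x y, P x -> P y -> P (x + y).
Proof. by case=> _ h x y px py; have := h 1 x y px py; rewrite scale1r. Qed.
Lemma subsZ (A : nalg k) (P : A -> Prop) : is_subspace P -> forall a x, P x -> P (a *: x).
Proof. by case=> h0 h a x px; have := h a x 0 px h0; rewrite addr0. Qed.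
Lemma subsN (A : nalg k) (P : A -> Prop) : is_subspace P -> forall x, P x -> P (- x).
Proof. by move=> h x px; rewrite -scaleN1r; apply: subsZ. Qed.
Lemma subsB (A : nalg k) (P : A -> Prop) : is_subspace P -> forall x y, P x -> P y -> P (x - y).
Proof. by move=> h x y px py; apply: subsD => //; apply: subsN. Qed.

End Basics.

Section Free.
Variables (k : fieldType) (Ids : nat -> seq (k * mterm) -> Prop)
  (Y : Type) (F : nalg k) (gen : Y -> F) (Hfree : is_free Ids gen).

Lemma hom_unique (g1 g2 : F -> F) : is_hom g1 -> is_hom g2 ->
  (forall y, g1 (gen y) = g2 (gen y)) -> forall u, g1 u = g2 u.
Proof.
move=> h1 h2 e u.
have [g [_ _ U]] := Hfree.2 F Hfree.1 (fun y => g2 (gen y)).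
by rewrite (U g1 h1 e) (U g2 h2 (fun _ => erefl)).
Qed.

Lemma hom_exists (f : Y -> F) : exists g : F -> F, is_hom g /\ forall y, g (gen y) = f y.
Proof. by have [g [h1 h2 _]] := Hfree.2 F Hfree.1 f; exists g. Qed.

Lemma F_ind (W : F -> Prop) : is_subspace W -> (forall y, W (gen y)) ->
  (forall x y, W x -> W y -> W (nmul x y)) -> forall u, W u.
Proof.
move=> [W0 Wlin] Wg Wm u.
have var : in_variety Ids (STalg W0 Wlin Wm).
  move=> n p Ip v; apply: val_inj; rewrite val_peval /=.
  exact: (Hfree.1 n p Ip).
have [g [hg eg _]] := Hfree.2 _ var (fun y => exist _ (gen y) (wbT (Wg y)) : STalg W0 Wlin Wm).
have hv : is_hom (fun x : STalg W0 Wlin Wm => val x) by [].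
have := hom_unique (hom_comp hg hv) (@hom_id _ F) (fun y => f_equal val (eg y)) u.
move=> <-; exact: (wbP (valP (g u))).
Qed.

End Free.

Section Main.
Variables (k : fieldType) (Ids : nat -> seq (k * mterm) -> Prop)
  (X : Type) (F : nalg k) (gen : X + X -> F) (Hfree : is_free Ids gen)
  (phi : F -> F) (Hphi : is_hom phi)
  (Hphi1 : forall x, phi (gen (inl x)) = gen (inl x))
  (Hphi2 : forall x, phi (gen (inr x)) = gen (inl x))
  (S : F -> Prop) (HS : forall s, S s -> Vsub gen phi s).

Local Notation V := (Vsub gen phi).
Local Notation TI := (tri_ideal gen phi S).

Lemma V_sub : is_subspace V.
Proof. split; first by move=> W [W0 _]. by move=> a x y vx vy W hW g c; case: (hW) => _ h; apply: h; [apply: vx|apply: vy]. Qed.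
Lemma V_op o : tri_ops phi o -> forall f g, V f -> V g -> V (o f g).
Proof. by move=> ho f g vf vg W hW hg hc; apply: (hc o ho); [apply: vf|apply: vg]. Qed.
Lemma V_mul f g : V f -> V g -> V (nmul f g).
Proof. by move=> hf hg; apply: (@V_op (fun f g => nmul f g) _ f g hf hg); apply: Or33. Qed.
Lemma V_vdash f g : V f -> V g -> V (nmul (phi f) g).
Proof. by move=> hf hg; apply: (@V_op (fun f g => nmul (phi f) g) _ f g hf hg); apply: Or31. Qed.
Lemma V_dashv f g : V f -> V g -> V (nmul f (phi g)).
Proof. by move=> hf hg; apply: (@V_op (fun f g => nmul f (phi g)) _ f g hf hg); apply: Or32. Qed.
Lemma V_gen x : V (gen (inr x)).
Proof. by move=> W _ hg _. Qed.

Lemma TI_V u : TI u -> V u.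
Proof. by move=> h; apply: h => //; [exact: V_sub | move=> o ho v j hv hj; split; apply: V_op]. Qed.
Lemma TI_sub : is_subspace TI.
Proof.
split; first by move=> J _ [J0 _].
move=> a x y hx hy J h1 h2 h3 h4; case: (h2) => _ h; apply: h; [exact: hx | exact: hy].
Qed.
Lemma TI_S s : S s -> TI s.
Proof. by move=> hs J _ _ h _; apply: h. Qed.
Lemma TI_op o : tri_ops phi o -> forall v j, V v -> TI j -> TI (o v j) /\ TI (o j v).
Proof.
move=> ho v j hv hj; split=> J h1 h2 h3 h4;
  have [] := h4 o ho v j hv (hj J h1 h2 h3 h4) => //.
Qed.
Lemma TI_lmul v j : V v -> TI j -> TI (nmul v j) /\ TI (nmul j v).
Proof. by move=> hv hj; apply: (@TI_op (fun f g => nmul f g) _ v j hv hj); apply: Or33. Qed.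
Lemma TI_vdash v j : V v -> TI j -> TI (nmul (phi v) j) /\ TI (nmul (phi j) v).
Proof. by move=> hv hj; apply: (@TI_op (fun f g => nmul (phi f) g) _ v j hv hj); apply: Or31. Qed.
Lemma TI_dashv v j : V v -> TI j -> TI (nmul v (phi j)) /\ TI (nmul j (phi v)).
Proof. by move=> hv hj; apply: (@TI_op (fun f g => nmul f (phi g)) _ v j hv hj); apply: Or32. Qed.

Let P := fun w => S w \/ exists s, S s /\ w = phi s.
Local Notation GI := (gen_ideal P).

Lemma GI_sub : is_subspace GI.
Proof.
split; first by move=> I [I0 _].
move=> a x y hx hy I h1 h2 h3 h4; case: (h1) => _ h; apply: h; [exact: hx | exact: hy].
Qed.
Lemma GI_P p : P p -> GI p.
Proof. by move=> hp I _ h _ _; apply: h. Qed.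
Lemma GI_l f j : GI j -> GI (nmul f j).
Proof. by move=> hj I h1 h2 h3 h4; exact: (h3 f j (hj I h1 h2 h3 h4)). Qed.
Lemma GI_r f j : GI j -> GI (nmul j f).
Proof. by move=> hj I h1 h2 h3 h4; exact: (h4 f j (hj I h1 h2 h3 h4)). Qed.

Lemma phiphi u : phi (phi u) = phi u.
Proof.
apply: (hom_unique Hfree (hom_comp Hphi Hphi) Hphi).
by case=> x; rewrite ?Hphi1 ?Hphi2 ?Hphi1.
Qed.

Lemma GI_phi j : GI j -> GI (phi j).
Proof.
move=> hj; apply: (hj (fun u => GI (phi u))).
- split; first by rewrite (hom0 Hphi); case: GI_sub.
  by move=> a x y hx hy; case: Hphi => -> _; case: GI_sub => _; apply.
- move=> p [hp | [s [hs ->]]]; apply: GI_P; right.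
    by exists p.
  by exists s; rewrite phiphi.
- by move=> f j' h; rewrite (homM Hphi); exact: (@GI_l (phi f) _ h).
- by move=> f j' h; rewrite (homM Hphi); exact: (@GI_r (phi f) _ h).
Qed.

Lemma forward u : TI u -> GI u /\ V u.
Proof.
move=> h; apply: (h (fun u => GI u /\ V u)).
- by move=> j [].
- split; first by split; [case: GI_sub | case: V_sub].
  move=> a x y [gx vx] [gy vy]; split; [by case: GI_sub => _; apply | by case: V_sub => _; apply].
- by move=> s hs; split; [apply: GI_P; left | apply: HS].
- move=> o ho v j hv [gj vj]; split; split; try by apply: V_op.
  + case: ho => -> /=; [exact: (@GI_l (phi v) j gj) | exact: (@GI_l v _ (@GI_phi j gj)) | exact: (@GI_l v j gj)].
  + case: ho => -> /=; [exact: (@GI_r v _ (@GI_phi j gj)) | exact: (@GI_r (phi v) j gj) | exact: (@GI_r v j gj)].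
Qed.

Definition epsf (y : X + X) : F := match y with inl x => gen (inl x) | inr _ => 0 end.
Definition dlf (y : X + X) : F := match y with inl x => gen (inr x) | inr x => gen (inr x) end.

Lemma backward u : GI u -> V u -> TI u.
Proof.
move=> hu.
have [eps [he ege]] := hom_exists Hfree epsf.
have [dl [hd egd]] := hom_exists Hfree dlf.
have e1 v : V v -> eps v = 0.
  move=> hv; apply: (hv (fun v => eps v = 0)).
  - split; first exact: hom0 he.
    by move=> a x y hx hy; case: he => -> _; rewrite hx hy scaler0 addr0.
  - by move=> x; rewrite ege.
  - move=> o ho f g hf hg.
    by case: ho => ->; rewrite (homM he) ?hf ?hg ?nmulr0 ?nmul0r.
have e3 w : phi (dl (eps w)) = eps w.
  apply: (hom_unique Hfree (hom_comp (hom_comp he hd) Hphi) he).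
  case=> x /=; rewrite !ege /=; first by rewrite egd /= Hphi2.
  by rewrite (hom0 hd) (hom0 Hphi).
have e4 w : V (dl w).
  move: w; apply: (F_ind Hfree).
  - split; first by rewrite (hom0 hd); case: V_sub.
    by move=> a x y hx hy; case: hd => -> _; case: V_sub => _; apply.
  - by case=> x; rewrite egd; apply: V_gen.
  - by move=> x y hx hy; rewrite (homM hd); apply: V_mul.
have e5 w : V (w - eps w).
  move: w; apply: (F_ind Hfree).
  - split; first by rewrite (hom0 he) subr0; case: V_sub.
    move=> a x y hx hy; case: (he) => -> _; rewrite lin_sub.
    by case: V_sub => _; apply.
  - case=> x; rewrite ege /=; first by rewrite subrr; case: V_sub.
    by rewrite subr0; apply: V_gen.
  - move=> x y hx hy; rewrite (homM he) nmul_expand.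
    case: V_sub => _ Vl.
    have VD a b : V a -> V b -> V (a + b).
      by move=> ha hb; have := Vl 1 a b ha hb; rewrite scale1r.
    have h1 := V_mul hx hy.
    have h2 := V_dashv hx (e4 (eps y)); rewrite e3 in h2.
    have h3 := V_vdash (e4 (eps x)) hy; rewrite e3 in h3.
    exact: (VD _ _ (VD _ _ h1 h2) h3).
pose I a := TI (a - eps a) /\ exists b, TI b /\ eps a = phi b.
have TI0 : TI 0 by case: TI_sub.
have TID a b : TI a -> TI b -> TI (a + b).
  by move=> ha hb; exact: (@subsD _ _ (tri_ideal gen phi S) TI_sub a b ha hb).
have TIL a x y : TI x -> TI y -> TI (a *: x + y) by apply: (proj2 TI_sub).
have hI : I u.
  apply: (hu I).
  - split.
      split; first by rewrite (hom0 he) subr0.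
      by exists 0; rewrite (hom0 he) (hom0 Hphi).
    move=> a x y [hx [bx [tbx ebx]]] [hy [by_ [tby eby]]]; split.
      by case: (he) => -> _; rewrite lin_sub; apply: TIL.
    exists (a *: bx + by_); split; first by apply: TIL.
    by case: (he) => -> _; case: (Hphi) => -> _; rewrite ebx eby.
  - move=> p [hp | [s [hs ->]]].
      split; first by rewrite (e1 p (HS hp)) subr0; exact: (@TI_S p hp).
      by exists 0; rewrite (e1 p (HS hp)) (hom0 Hphi).
    have ep : eps (phi s) = phi s.
      apply: (hom_unique Hfree (hom_comp Hphi he) Hphi).
      by case=> x; rewrite ?Hphi1 ?Hphi2 ege.
    split; first by rewrite ep subrr.
    by exists s; split => //; exact: (@TI_S s hs).
  - move=> f j [hj [b [tb eb]]].
    split.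
      rewrite (homM he) nmul_expand.
      have h1 := (TI_lmul (e5 f) hj).1.
      have h2 := (TI_dashv (e5 f) tb).1; rewrite -eb in h2.
      have h3 := (TI_vdash (e4 (eps f)) hj).1; rewrite e3 in h3.
      exact: (TID _ _ (TID _ _ h1 h2) h3).
    exists (nmul (dl (eps f)) b); split; first exact: (TI_lmul (e4 _) tb).1.
    by rewrite (homM he) (homM Hphi) e3 eb.
  - move=> f j [hj [b [tb eb]]].
    split.
      rewrite (homM he) nmul_expand.
      have h1 := (TI_lmul (e5 f) hj).2.
      have h2 := (TI_dashv (e4 (eps f)) hj).2; rewrite e3 in h2.
      have h3 := (TI_vdash (e5 f) tb).2; rewrite -eb in h3.
      exact: (TID _ _ (TID _ _ h1 h2) h3).
    exists (nmul b (dl (eps f))); split; first exact: (TI_lmul (e4 _) tb).2.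
    by rewrite (homM he) (homM Hphi) e3 eb.
move=> hv; case: hI => h _; by rewrite e1 // subr0 in h.
Qed.

End Main.

Theorem theorem4p1 (k : fieldType) (Ids : nat -> seq (k * mterm) -> Prop)
  (HIds : forall n p, Ids n p -> polylinear n p)
  (X : Type) (F : nalg k) (gen : X + X -> F) (Hfree : is_free Ids gen)
  (phi : F -> F) (Hphi : is_hom phi)
  (Hphi1 : forall x, phi (gen (inl x)) = gen (inl x))
  (Hphi2 : forall x, phi (gen (inr x)) = gen (inl x))
  (S : F -> Prop) (HS : forall s, S s -> Vsub gen phi s) :
  forall u : F, tri_ideal gen phi S u <->
    (gen_ideal (fun w => S w \/ exists s, S s /\ w = phi s) u /\ Vsub gen phi u).
Proof.
move=> u; split.
  exact: (@forward k Ids X F gen Hfree phi Hphi Hphi1 Hphi2 S HS u).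
by case; exact: (@backward k Ids X F gen Hfree phi Hphi Hphi1 Hphi2 S HS u).
Qed.

Print Assumptions theorem4p1.
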